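(* Let $I,I'$ be finite subsets of $\mathbb N\setminus\{0\}$ and $J,J'$ nonempty finite subsets of $\mathbb N\setminus\{0\}$ (the triples $(I,J,\emptyset)$, $(I',J',\emptyset)$ need not be reduced). Then $\mathcal Q[I,J]\subseteq\mathcal Q[I',J']$ if and only if for every $i\in I$ with $i\ne1$ there is $i'\in I'$ with $i\mid i'$, and for every $j\in J$ there is $j'\in J'$ with $j\mid j'$.
   Context: $\mathbf Q(\mathcal K)=\mathbf{ISPP}_u(\mathcal K)$. $\Gamma(\mathbf G,u)$ is the Wajsberg hoop on $[0,u]$ with $ab=\max\{a+b-u,0\}$, $a\to b=\min\{u-a+b,u\}$; $\mathbf{\L}_n=\Gamma(\mathbb Z,n)$ and $\mathbf{\L}_{n,k}=\Gamma(\mathbb Z\times_l\mathbb Z,(n,k))$ with the lexicographic order. $\mathcal Q[I,J]=\mathbf Q(\{\mathbf{\L}_i:i\in I\}\cup\{\mathbf{\L}_{j,1}:j\in J\})$. *)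

(* Defs.v *)
From mathcomp Require Import all_boot all_order all_algebra.
Set Implicit Arguments. Unset Strict Implicit. Unset Printing Implicit Defensive.
Import Order.TTheory GRing.Theory Num.Theory.

Record hoopAlg := HoopAlg {
  car :> Type;
  hmul : car -> car -> car;
  himp : car -> car -> car;
  hone : car }.

(* ab = max(a+b-n,0) (truncated subtraction), a->b = min(n-a+b,n). Values are
   always <= n, so inord is the identity on them. *)
Definition Ln_mul (n : nat) (a b : 'I_n.+1) : 'I_n.+1 := inord ((a + b) - n).
Definition Ln_imp (n : nat) (a b : 'I_n.+1) : 'I_n.+1 := inord (minn (n - a + b) n).
Definition Ln (n : nat) : hoopAlg :=
  @HoopAlg 'I_n.+1 (@Ln_mul n) (@Ln_imp n) ord_max.

Local Open Scope ring_scope.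
Definition lexle (p q : int * int) : bool :=
  (p.1 < q.1) || ((p.1 == q.1) && (p.2 <= q.2)).
Definition lexmax (p q : int * int) := if lexle p q then q else p.
Definition lexmin (p q : int * int) := if lexle p q then p else q.
Definition padd (p q : int * int) : int * int := (p.1 + q.1, p.2 + q.2).
Definition psub (p q : int * int) : int * int := (p.1 - q.1, p.2 - q.2).
Definition unit_nk (n k : nat) : int * int := ((n%:Z), (k%:Z)).
Definition inrange (n k : nat) (p : int * int) : bool :=
  lexle (0, 0) p && lexle p (unit_nk n k).
Definition Lcar (n k : nat) := {p : int * int | inrange n k p}.
(* clamp is the identity on values of the operations below (they stay in
   [(0,0),(n,k)]); it only serves to avoid carrying closure proofs. *)
Definition clamp (n k : nat) (p : int * int) : int * int :=
  if inrange n k p then p else (0, 0).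
Lemma clamp_in (n k : nat) (p : int * int) : inrange n k (clamp n k p).
Proof.
rewrite /clamp; case: ifP => // _.
rewrite /inrange /lexle /=.
by case: n.
Qed.
Definition mkL (n k : nat) (p : int * int) : Lcar n k :=
  exist _ (clamp n k p) (clamp_in n k p).
Definition Lnk_mul (n k : nat) (a b : Lcar n k) : Lcar n k :=
  mkL n k (lexmax (psub (padd (sval a) (sval b)) (unit_nk n k)) (0, 0)).
Definition Lnk_imp (n k : nat) (a b : Lcar n k) : Lcar n k :=
  mkL n k (lexmin (padd (psub (unit_nk n k) (sval a)) (sval b)) (unit_nk n k)).
Definition Lnk (n k : nat) : hoopAlg :=
  @HoopAlg (Lcar n k) (@Lnk_mul n k) (@Lnk_imp n k) (mkL n k (unit_nk n k)).
Local Close Scope ring_scope.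

Inductive gcode := GL of nat | GLL of nat.
Definition alg_of (c : gcode) : hoopAlg :=
  match c with GL n => Ln n | GLL n => Lnk n 1 end.
Definition inK (I J : seq nat) (c : gcode) : Prop :=
  match c with GL n => n \in I | GLL n => n \in J end.

Definition ultrafilter (Y : Type) (U : (Y -> Prop) -> Prop) : Prop :=
  [/\ U (fun _ => True), ~ U (fun _ => False),
      (forall S T : Y -> Prop, U S -> (forall y, S y -> T y) -> U T),
      (forall S T : Y -> Prop, U S -> U T -> U (fun y => S y /\ T y)) &
      (forall S : Y -> Prop, U S \/ U (fun y => ~ S y))].

(* A in ISPP_u(K): A is isomorphic to a subalgebra of a product
   prod_{x in X} (prod_{y in Y x} C x y) / U_x of ultraproducts of members of K.
   The embedding is given by a map f choosing representatives in
   prod_y C x y; "modulo U_x" equality is membership of the agreement set in U_x. *)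
Definition ISPPu (K : gcode -> Prop) (A : hoopAlg) : Prop :=
  exists (X : Type) (Y : X -> Type) (U : forall x, (Y x -> Prop) -> Prop)
         (C : forall x, Y x -> gcode)
         (f : A -> forall x (y : Y x), alg_of (C x y)),
    (forall x, ultrafilter (U x)) /\
    (forall x y, K (C x y)) /\
    (forall a b x, U x (fun y => f (hmul a b) x y = hmul (f a x y) (f b x y))) /\
    (forall a b x, U x (fun y => f (himp a b) x y = himp (f a x y) (f b x y))) /\
    (forall x, U x (fun y => f (hone A) x y = hone (alg_of (C x y)))) /\
    (forall a b, (forall x, U x (fun y => f a x y = f b x y)) -> a = b).

Definition QIJ (I J : seq nat) (A : hoopAlg) : Prop := ISPPu (inK I J) A.

(* Main.v *)
Require Import Defs.
From mathcomp Require Import all_boot all_order all_algebra.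
From mathcomp Require Import zify ring.
From Stdlib Require Import Classical.

Module M1.
Import Order.TTheory GRing.Theory Num.Theory.
Set Implicit Arguments. Unset Strict Implicit. Unset Printing Implicit Defensive.

Inductive tm := V | One | Mul of tm & tm | Imp of tm & tm.
Fixpoint eval (A : hoopAlg) (a : A) (t : tm) : A :=
  match t with
  | V => a | One => hone A
  | Mul t1 t2 => hmul (eval a t1) (eval a t2)
  | Imp t1 t2 => himp (eval a t1) (eval a t2) end.
Fixpoint pwt k := match k with 0 => One | k'.+1 => Mul (pwt k') V end.

Section UF.
Variables (Y : Type) (U : (Y -> Prop) -> Prop) (HU : ultrafilter U).
Lemma U_mono (S T : Y -> Prop) : U S -> (forall y, S y -> T y) -> U T.
Proof. by case: HU => _ _ H _ _; apply: H. Qed.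
Lemma U_and (S T : Y -> Prop) : U S -> U T -> U (fun y => S y /\ T y).
Proof. by case: HU => _ _ _ H _; apply: H. Qed.
Lemma U_ex (S : Y -> Prop) : U S -> exists y, S y.
Proof.
move=> HS; apply: NNPP => Hn; have [_ H0 _ _ _] := HU; apply: H0.
apply: (U_mono (T := fun _ => False) HS) => y Sy; apply: Hn; exists y; exact Sy.
Qed.
Lemma U_compl (S : Y -> Prop) : ~ U S -> U (fun y => ~ S y).
Proof. by case: HU => _ _ _ _ H; case: (H S). Qed.
Lemma U_all (S : Y -> Prop) : (forall y, S y) -> U S.
Proof. move=> E; have [HT _ H _ _] := HU; exact: (H _ S HT (fun y _ => E y)). Qed.
End UF.

Lemma transfer K (A : hoopAlg) (a : A) s1 s2 t1 t2 t3 t4 :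
  ISPPu K A -> eval a s1 <> eval a s2 -> eval a t1 = eval a t2 ->
  eval a t3 = eval a t4 ->
  exists c, K c /\ exists b : alg_of c,
    [/\ eval b s1 <> eval b s2, eval b t1 = eval b t2 & eval b t3 = eval b t4].
Proof.
case=> X [Y [U [C [f [HU [HK [Hm [Hi [H1 Hinj]]]]]]]]] Hs Ht1 Ht2.
have hom : forall x t, U x (fun y => f (eval a t) x y = eval (f a x y) t).
  move=> x; elim=> [||t1' IH1 t2' IH2|t1' IH1 t2' IH2] /=.
  - by apply: (U_all (HU x)).
  - by apply: H1.
  - apply: (U_mono (HU x) (U_and (HU x) (U_and (HU x) IH1 IH2) (Hm (eval a t1') (eval a t2') x))).
    by move=> y [[-> ->] ->].
  - apply: (U_mono (HU x) (U_and (HU x) (U_and (HU x) IH1 IH2) (Hi (eval a t1') (eval a t2') x))).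
    by move=> y [[-> ->] ->].
have [x Hx] : exists x, ~ U x (fun y => f (eval a s1) x y = f (eval a s2) x y).
  apply: NNPP => Hn; apply: Hs; apply: Hinj => x; apply: NNPP => Hx.
  by apply: Hn; exists x.
have Hc := U_compl (HU x) Hx.
have HH := U_and (HU x) Hc (U_and (HU x) (U_and (HU x) (hom x s1) (hom x s2))
   (U_and (HU x) (U_and (HU x) (hom x t1) (hom x t2))
      (U_and (HU x) (hom x t3) (hom x t4)))).
have [y [Hne [[E1 E2] [[E3 E4] [E5 E6]]]]] := U_ex (HU x) HH.
exists (C x y); split; first exact: HK.
exists (f a x y); split.
- by rewrite -E1 -E2.
- by rewrite -E3 -E4 Ht1.
- by rewrite -E5 -E6 Ht2.
Qed.

Lemma self_mem (K : gcode -> Prop) c : K c -> ISPPu K (alg_of c).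
Proof.
move=> Kc.
exists unit, (fun _ => unit), (fun _ (S : unit -> Prop) => S tt), (fun _ _ => c),
  (fun a _ _ => a).
split.
  move=> _; split => //.
  - by move=> S T HS HST; apply: HST.
  - by move=> S; case: (classic (S tt)); [left|right].
split; first by [].
split; first by [].
split; first by [].
split; first by [].
by move=> a b /(_ tt).
Qed.

End M1.
Import M1.

Module M2.
Import Order.TTheory GRing.Theory Num.Theory.
Set Implicit Arguments. Unset Strict Implicit. Unset Printing Implicit Defensive.

Lemma Ln_mulE n (a b : Ln n) : val (hmul a b) = (a + b) - n.
Proof. rewrite /= /Ln_mul inordK //; have := ltn_ord a; have := ltn_ord b; lia. Qed.
Lemma Ln_impE n (a b : Ln n) : val (himp a b) = minn (n - a + b) n.
Proof. rewrite /= /Ln_imp inordK //; lia. Qed.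
Lemma Ln_oneE n : val (hone (Ln n)) = n.
Proof. by []. Qed.
Lemma Ln_pw n (b : Ln n) k : val (eval b (pwt k)) = n - k * (n - b).
Proof.
elim: k => [|k IH] /=; first by rewrite mul0n subn0.
rewrite Ln_mulE IH mulSn; have := ltn_ord b; lia.
Qed.

Local Open Scope ring_scope.
Ltac lexs := rewrite /inrange /clamp /lexmax /lexmin /lexle /padd /psub /unit_nk /=.

Lemma Lnk_mulE n (a b : Lnk n 1) :
  sval (hmul a b) = lexmax (psub (padd (sval a) (sval b)) (unit_nk n 1)) (0, 0).
Proof.
case: a b => [[a1 a2] Ha] [[b1 b2] Hb] /=; rewrite /Lnk_mul /mkL /= /clamp.
move: Ha Hb; lexs; case: ifP => // Hx Ha Hb; exfalso; move: Hx Ha Hb; lexs;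
  repeat (case: ifP => /=); lia.
Qed.
Lemma Lnk_impE n (a b : Lnk n 1) :
  sval (himp a b) = lexmin (padd (psub (unit_nk n 1) (sval a)) (sval b)) (unit_nk n 1).
Proof.
case: a b => [[a1 a2] Ha] [[b1 b2] Hb] /=; rewrite /Lnk_imp /mkL /= /clamp.
move: Ha Hb; lexs; case: ifP => // Hx Ha Hb; exfalso; move: Hx Ha Hb; lexs;
  repeat (case: ifP => /=); lia.
Qed.
Lemma Lnk_oneE n : sval (hone (Lnk n 1)) = unit_nk n 1.
Proof. rewrite /= /clamp; case: ifP => // /negP []; lexs; lia. Qed.

Lemma Lnk_pw n (b : Lnk n 1) k : sval (eval b (pwt k)) =
  lexmax (n%:Z - k%:Z * (n%:Z - (sval b).1), 1 - k%:Z * (1 - (sval b).2)) (0, 0).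
Proof.
elim: k => [|k IH]; first by rewrite [eval _ _]/= Lnk_oneE !mul0r !subr0; lexs; case: ifP => // /negP []; lia.
rewrite [eval _ _]/= Lnk_mulE IH.
case: b {IH} => [[b1 b2] Hb] /=; move: Hb; lexs.
rewrite (intS k) !mulrDl !mul1r.
set M1 := k%:Z * _; set M2 := k%:Z * _.
move=> Hb; repeat (case: ifP => /=); move=> *;
  first [reflexivity | (congr (_,_); lia) | (exfalso; lia)].
Qed.

End M2.
Import M2.

Module M3.
Import Order.TTheory GRing.Theory Num.Theory.
Set Implicit Arguments. Unset Strict Implicit. Unset Printing Implicit Defensive.

Lemma eval_Imp (A : hoopAlg) (b : A) t1 t2 : eval b (Imp t1 t2) = himp (eval b t1) (eval b t2).
Proof. by []. Qed.
Lemma eval_Mul (A : hoopAlg) (b : A) t1 t2 : eval b (Mul t1 t2) = hmul (eval b t1) (eval b t2).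
Proof. by []. Qed.
Section SrcI.
Variable i : nat.
Hypothesis Hi : (1 < i)%N.
Definition ai : Ln i := inord i.-1.
Lemma ai_val : nat_of_ord ai = i.-1.
Proof. by rewrite /ai inordK //; lia. Qed.
Lemma ai_pw k : val (eval ai (pwt k)) = i - k.
Proof. rewrite Ln_pw ai_val. have -> : i - i.-1 = 1 by lia. by rewrite muln1. Qed.
Lemma srcI1 : eval ai (pwt i.-1) <> eval ai (pwt i).
Proof. move/(congr1 val); rewrite !ai_pw; lia. Qed.
Lemma srcI2 : eval ai (pwt i) = eval ai (pwt i.+1).
Proof. apply: val_inj; rewrite !ai_pw; lia. Qed.
Lemma srcI3 : eval ai (Imp (pwt i.-1) (pwt i)) = eval ai V.
Proof. apply: val_inj; rewrite eval_Imp Ln_impE !ai_pw /= ai_val; lia. Qed.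
End SrcI.

Lemma tgtI_Ln n i (b : Ln n) : (1 < i)%N ->
  eval b (pwt i.-1) <> eval b (pwt i) -> eval b (pwt i) = eval b (pwt i.+1) ->
  eval b (Imp (pwt i.-1) (pwt i)) = eval b V -> (i %| n)%N.
Proof.
case: i => [|[|m]] // _ H1 /(congr1 val) H2 /(congr1 val) H3.
have H1' : val (eval b (pwt m.+1)) != val (eval b (pwt m.+2)).
  by apply/negP => /eqP /val_inj.
move: H1' H2 H3; rewrite eval_Imp Ln_impE !Ln_pw /=.
have hb := ltn_ord b.
rewrite !(mulSn _ (n - b)).
set X := m * (n - b) => G1 G2 G3.
apply/dvdnP; exists (n - b); rewrite mulnC !mulSn -/X; lia.
Qed.

Local Open Scope ring_scope.
Lemma pairNeq (p q : int * int) : p <> q -> (p.1 != q.1) || (p.2 != q.2).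
Proof. case: p q => [p1 p2] [q1 q2] /= H; case: eqP => [E1|//]; case: eqP => [E2|//]; by case: H; rewrite E1 E2. Qed.
Lemma pairEq (p q : int * int) : p = q -> (p.1 == q.1) && (p.2 == q.2).
Proof. by move=> ->; rewrite !eqxx. Qed.

Lemma tgtI_Lnk n i (b : Lnk n 1) : (1 < i)%N ->
  eval b (pwt i.-1) <> eval b (pwt i) -> eval b (pwt i) = eval b (pwt i.+1) ->
  eval b (Imp (pwt i.-1) (pwt i)) = eval b V -> False.
Proof.
case: i => [|[|m]] // _ H1 /(congr1 sval)/pairEq H2 /(congr1 sval)/pairEq H3.
have /pairNeq H1' : sval (eval b (pwt m.+1)) <> sval (eval b (pwt m.+2)).
  by move/val_inj.
move: H1' H2 H3; rewrite eval_Imp Lnk_impE !Lnk_pw /=.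
clear H1; case: b => [[b1 b2] Hb] /=; move: Hb; lexs.
rewrite !(intS m.+1) !(intS m) !mulrDl !mul1r.
set X1 := m%:Z * _; set X2 := m%:Z * _.
have HX2a : (0 <= 1 - b2) -> 0 <= X2 by move=> h; rewrite /X2 mulr_ge0.
have HX2b : (1 - b2 <= 0) -> X2 <= 0 by move=> h; rewrite /X2 mulr_ge0_le0.
move=> Hb; repeat (case: ifP => /=); move=> *; lia.
Qed.

End M3.
Import M3.

Module M4.
Import Order.TTheory GRing.Theory Num.Theory.
Set Implicit Arguments. Unset Strict Implicit. Unset Printing Implicit Defensive.

Fixpoint pwg (d : tm) k := match k with 0 => One | k'.+1 => Mul (pwg d k') d end.
Lemma eval_pwg (A : hoopAlg) (b : A) d k : eval b (pwg d k) = eval (eval b d) (pwt k).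
Proof. by elim: k => //= k ->. Qed.
Definition dtm j := Imp (pwt j) (pwt j.+1).

Lemma tgtJ_Ln n M (e : Ln n) : (n <= M)%N -> eval e (pwt M) = eval e (pwt M.+1).
Proof.
move=> hM; apply: val_inj; rewrite !Ln_pw mulSn.
have hb := ltn_ord e.
have : (0 < n - e)%N -> (M <= M * (n - e))%N by move=> h; rewrite leq_pmulr.
lia.
Qed.

Local Open Scope ring_scope.
Lemma sval_inj n (a b : Lnk n 1) : sval a = sval b -> a = b.
Proof. exact: val_inj. Qed.

Section SrcJ.
Variable j : nat.
Hypothesis Hj : (0 < j)%N.
Definition cj : Lnk j 1 := mkL j 1 (j%:Z - 1, 1).
Lemma cj_val : sval cj = (j%:Z - 1, 1).
Proof. rewrite /= /clamp; case: ifP => // /negP []; lexs; lia. Qed.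
Lemma cj_pw k : sval (eval cj (pwt k)) = lexmax (j%:Z - k%:Z, 1) (0, 0).
Proof.
rewrite Lnk_pw cj_val /=.
rewrite (_ : j%:Z - (j%:Z - 1) = 1); last by ring.
by rewrite subrr !mulr0 subr0 mulr1.
Qed.
Lemma cj_d : sval (eval cj (dtm j)) = (j%:Z, 0).
Proof.
rewrite /dtm eval_Imp Lnk_impE !cj_pw; lexs.
rewrite (intS j); repeat (case: ifP => /=); move=> *;
  first [reflexivity | (congr (_,_); lia) | (exfalso; lia)].
Qed.
Lemma srcJ1 M : eval cj (pwg (dtm j) M) <> eval cj (pwg (dtm j) M.+1).
Proof.
rewrite !eval_pwg => /(congr1 sval); rewrite !Lnk_pw cj_d /= subrr !mulr0 subr0.
rewrite !subr0 !mulr1; lexs; rewrite (intS M).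
rewrite (_ : (j%:Z == 0) = false) /=; last by lia.
by case; lia.
Qed.
Lemma srcJ2 : eval cj (pwt j.+1) = eval cj (pwt j.+2).
Proof.
apply: sval_inj; rewrite !cj_pw; lexs; repeat (case: ifP => /=); move=> *;
  first [reflexivity | (congr (_,_); lia) | (exfalso; lia)].
Qed.
End SrcJ.

Lemma imp_self n (p : Lnk n 1) : sval (himp p p) = unit_nk n 1.
Proof.
rewrite Lnk_impE; case: (sval p) => p1 p2; lexs.
repeat (case: ifP => /=); move=> *;
  first [reflexivity | (congr (_,_); lia) | (exfalso; lia)].
Qed.

Lemma tgtJ_Lnk n j M (b : Lnk n 1) : (0 < j)%N -> (n < M)%N ->
  eval b (pwt j.+1) = eval b (pwt j.+2) ->
  eval b (pwg (dtm j) M) <> eval b (pwg (dtm j) M.+1) -> (j %| n)%N.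
Proof.
move=> Hj HM E H.
have Hne : eval b (pwt j) <> eval b (pwt j.+1).
  move=> E'; apply: H; rewrite !eval_pwg.
  have Hd : sval (eval b (dtm j)) = unit_nk n 1 by rewrite /dtm eval_Imp E' imp_self.
  apply: sval_inj; rewrite !Lnk_pw Hd /= !subrr !mulr0 !subr0 //.
move: E => /(congr1 sval)/pairEq E.
have /pairNeq Hne' : sval (eval b (pwt j)) <> sval (eval b (pwt j.+1)) by move/val_inj.
clear Hne.
case: j Hj E Hne' H => [//|m] _.
move=> E Hne' H.
have Hb := svalP b; case Eb: (sval b) Hb => [b1 b2] Hb.
set X1 := m%:Z * (n%:Z - b1); set X2 := m%:Z * (1 - b2).
have K : sval (eval b (dtm m.+1)) = ((n%:Z - b1) + X1, (1 - b2) + X2) /\ (0 <= n%:Z - ((n%:Z - b1) + X1)).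
  move: E Hne'; rewrite /dtm eval_Imp Lnk_impE !Lnk_pw Eb /=.
  move: Hb; lexs.
  rewrite !(intS m.+2) !(intS m.+1) !(intS m) !mulrDl !mul1r -/X1 -/X2.
  repeat (case: ifP => /=); move=> *;
  first [(split; [congr (_,_)|]; lia) | (exfalso; lia)].
have /pairNeq H' : sval (eval b (pwg (dtm m.+1) M)) <> sval (eval b (pwg (dtm m.+1) M.+1)).
  by move/sval_inj.
move: H'; rewrite !eval_pwg !Lnk_pw (proj1 K) /=.
have K2 := proj2 K.
set r := n%:Z - (n%:Z - b1 + X1).
have [r0|rpos] := eqVneq r 0.
  move=> _.
  have Hs : (0 <= n%:Z - b1) by move: Hb; lexs; lia.
  have [k Ek] : exists k : nat, n%:Z - b1 = k%:Z by exists `|n%:Z - b1|%N; rewrite gez0_abs.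
  apply/dvdnP; exists k.
  move: r0; rewrite /r /X1 Ek => /eqP.
  rewrite -PoszM -PoszD => h.
  rewrite subr_eq0 eqz_nat in h.
  by rewrite (eqP h) mulnS mulnC.
have Hr : 0 < r by lia.
set Y := M%:Z * r.
have HY : M%:Z <= Y by rewrite /Y ler_peMr //; lia.
set Z := M%:Z * _.
rewrite (intS M) !mulrDl !mul1r -/Y -/Z.
lexs; repeat (case: ifP => /=); move=> *; lia.
Qed.

End M4.
Import M4.

Module M5.
Import Order.TTheory GRing.Theory Num.Theory.
Set Implicit Arguments. Unset Strict Implicit. Unset Printing Implicit Defensive.

Definition ishom (A B : hoopAlg) (e : A -> B) :=
  [/\ forall a b, e (hmul a b) = hmul (e a) (e b),
      forall a b, e (himp a b) = himp (e a) (e b),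
      e (hone A) = hone B & injective e].

Definition eI (i i' : nat) (a : Ln i) : Ln i' := inord (a * (i' %/ i)).

Lemma eI_hom i i' : (0 < i)%N -> (i %| i')%N -> (0 < i')%N -> ishom (@eI i i').
Proof.
move=> hi /dvdnP [q Eq] hi'.
have hq : (0 < q)%N by move: hi'; rewrite Eq muln_gt0 => /andP [].
have Eq' : i' %/ i = q by rewrite Eq mulnK.
have bnd : forall a : Ln i, (a * q <= i')%N.
  by move=> a; rewrite Eq mulnC leq_mul2l (ltnSE (ltn_ord a)) orbT.
have vE : forall a : Ln i, nat_of_ord (eI i' a) = (a * q)%N.
  by move=> a; rewrite /eI Eq' inordK // ltnS bnd.
split.
- move=> a b; apply: val_inj; rewrite /= !vE !Ln_mulE !vE Eq.
  by rewrite mulnBl mulnDl (mulnC q i).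
- move=> a b; apply: val_inj; rewrite /= !vE !Ln_impE !vE Eq minnMl.
  by rewrite mulnDl mulnBl (mulnC q i).
- by apply: val_inj; rewrite /= vE /= Eq mulnC.
- move=> a b /(congr1 val); rewrite /= !vE => /eqP; rewrite eqn_pmul2r // => /eqP.
  exact: val_inj.
Qed.

Local Open Scope ring_scope.

Definition e1 (i j0 : nat) (a : Ln i) : Lnk j0 1 :=
  mkL j0 1 (((a : nat) * j0)%N%:Z, (a : nat)%:Z).

Lemma e1_hom j0 : (0 < j0)%N -> ishom (@e1 1 j0).
Proof.
move=> hj.
have vE : forall a : Ln 1, sval (e1 j0 a) = (((a : nat) * j0)%N%:Z, (a : nat)%:Z).
  move=> a; rewrite /= /clamp; case: ifP => // /negP []; have := ltn_ord a.
  by case: a => [[|[|?]] ?] //= _; lexs; lia.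
have cs : forall a : Ln 1, a = ord0 \/ a = ord_max.
  by case=> [[|[|m]] hm]; [left|right|by move: hm]; apply: val_inj.
split.
- move=> a b; apply: sval_inj; rewrite Lnk_mulE !vE.
  case: (cs a) => ->; case: (cs b) => ->; rewrite /= ?Ln_mulE /=;
  lexs; repeat (case: ifP => /=); move=> *; first [reflexivity | (congr (_,_); lia) | (exfalso; lia)].
- move=> a b; apply: sval_inj; rewrite Lnk_impE !vE.
  case: (cs a) => ->; case: (cs b) => ->; rewrite /= ?Ln_impE /=;
  lexs; repeat (case: ifP => /=); move=> *; first [reflexivity | (congr (_,_); lia) | (exfalso; lia)].
- by apply: sval_inj; rewrite vE Lnk_oneE /= mul1n.
- move=> a b /(congr1 sval); rewrite !vE => -[_ h].
  by apply: val_inj; move: h => /= [].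
Qed.

Section Scale.
Variable q : int.
Hypothesis hq : 0 < q.
Definition sc (p : int * int) : int * int := (p.1 * q, p.2).
Lemma lexle_sc p r : lexle (sc p) (sc r) = lexle p r.
Proof.
rewrite /lexle /= ltr_pM2r // (inj_eq (mulIf _)) //; lia.
Qed.
Lemma lexmax_sc p r : lexmax (sc p) (sc r) = sc (lexmax p r).
Proof. by rewrite /lexmax lexle_sc; case: ifP. Qed.
Lemma lexmin_sc p r : lexmin (sc p) (sc r) = sc (lexmin p r).
Proof. by rewrite /lexmin lexle_sc; case: ifP. Qed.
Lemma padd_sc p r : padd (sc p) (sc r) = sc (padd p r).
Proof. by rewrite /padd /sc /= mulrDl. Qed.
Lemma psub_sc p r : psub (sc p) (sc r) = sc (psub p r).
Proof. by rewrite /psub /sc /= mulrBl. Qed.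
Lemma sc0 : sc (0, 0) = (0, 0).
Proof. by rewrite /sc /= mul0r. Qed.
End Scale.

Definition eJ (j j' : nat) (a : Lnk j 1) : Lnk j' 1 :=
  mkL j' 1 ((sval a).1 * (j' %/ j)%N%:Z, (sval a).2).

Lemma eJ_hom j j' : (0 < j)%N -> (j %| j')%N -> (0 < j')%N -> ishom (@eJ j j').
Proof.
move=> hj /dvdnP [k Ek] hj'.
have hk : (0 < k)%N by move: hj'; rewrite Ek muln_gt0 => /andP [].
have Ek' : (j' %/ j)%N = k by rewrite Ek mulnK.
have hq : 0 < k%:Z by lia.
have Eu : unit_nk j' 1 = sc k%:Z (unit_nk j 1).
  by rewrite /unit_nk /sc /= Ek PoszM mulrC.
have Ein : forall p, inrange j' 1 (sc k%:Z p) = inrange j 1 p.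
  by move=> p; rewrite /inrange Eu -(sc0 k%:Z) !lexle_sc.
have vE : forall a : Lnk j 1, sval (eJ j' a) = sc k%:Z (sval a).
  move=> a; rewrite /= /clamp Ek' -/(sc k%:Z (sval a)) Ein (svalP a) //.
split.
- move=> a b; apply: sval_inj; rewrite vE !Lnk_mulE !vE.
  by rewrite padd_sc Eu psub_sc -{2}(sc0 k%:Z) lexmax_sc.
- move=> a b; apply: sval_inj; rewrite vE !Lnk_impE !vE.
  by rewrite Eu psub_sc padd_sc lexmin_sc.
- by apply: sval_inj; rewrite vE !Lnk_oneE Eu.
- move=> a b /(congr1 sval); rewrite !vE; case: a b => [[a1 a2] ?] [[b1 b2] ?] /=.
  rewrite /sc /= => -[/(mulIf _) h1 h2]; apply: sval_inj => /=.
  by rewrite h1 ?h2 //; lia.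
Qed.

End M5.
Import M5.

Module M6.
Import Order.TTheory GRing.Theory Num.Theory.
Set Implicit Arguments. Unset Strict Implicit. Unset Printing Implicit Defensive.

Definition tgt (s : seq nat) (x : nat) := nth 0 s (find (dvdn x) s).
Lemma tgt_spec s x : (exists2 y, y \in s & x %| y) -> tgt s x \in s /\ x %| tgt s x.
Proof.
move=> [y ys dy]; have hs : has (dvdn x) s by apply/hasP; exists y.
by split; [apply: mem_nth; rewrite -has_find | exact: nth_find].
Qed.

Definition emb_of (I' J' : seq nat) (c : gcode) : {c' : gcode & alg_of c -> alg_of c'} :=
  match c as c0 return {c' : gcode & alg_of c0 -> alg_of c'} with
  | GL i => if i == 1 then existT (fun c' => Ln i -> alg_of c') (GLL (head 1 J')) (@e1 i (head 1 J'))
            else existT (fun c' => Ln i -> alg_of c') (GL (tgt I' i)) (@eI i (tgt I' i))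
  | GLL j => existT (fun c' => Lnk j 1 -> alg_of c') (GLL (tgt J' j)) (@eJ j (tgt J' j))
  end.

Lemma ISPPu_emb (K K' : gcode -> Prop)
  (emb : forall c, {c' : gcode & alg_of c -> alg_of c'}) A :
  (forall c, K c -> K' (projT1 (emb c)) /\ ishom (projT2 (emb c))) ->
  ISPPu K A -> ISPPu K' A.
Proof.
move=> He [X [Y [U [C [f [HU [HK [Hm [Hi [H1 Hinj]]]]]]]]]].
exists X, Y, U, (fun x y => projT1 (emb (C x y))),
  (fun a x y => projT2 (emb (C x y)) (f a x y)).
split; first by [].
split; first by move=> x y; case: (He _ (HK x y)).
split.
  move=> a b x; apply: (U_mono (HU x) (Hm a b x)) => y ->.
  by case: (He _ (HK x y)) => _ [-> _ _ _].
split.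
  move=> a b x; apply: (U_mono (HU x) (Hi a b x)) => y ->.
  by case: (He _ (HK x y)) => _ [_ -> _ _].
split.
  move=> x; apply: (U_mono (HU x) (H1 x)) => y ->.
  by case: (He _ (HK x y)) => _ [_ _ -> _].
move=> a b H; apply: Hinj => x; apply: (U_mono (HU x) (H x)) => y.
by case: (He _ (HK x y)) => _ [_ _ _ hinj] /hinj.
Qed.

Lemma mem_le_sumn s x : x \in s -> x <= sumn s.
Proof.
elim: s => //= y s IH; rewrite in_cons => /orP [/eqP ->|/IH]; first exact: leq_addr.
by move=> h; apply: (leq_trans h); apply: leq_addl.
Qed.


End M6.
Import M6.
Unset Implicit Arguments.
Import Order.TTheory GRing.Theory Num.Theory.

Theorem lemma4p12 (I J I' J' : seq nat) :
  all (leq 1) I -> all (leq 1) J -> all (leq 1) I' -> all (leq 1) J' ->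
  J != [::] -> J' != [::] ->
  ((forall A : hoopAlg, QIJ I J A -> QIJ I' J' A) <->
   ((forall i, i \in I -> i != 1 -> exists2 i', i' \in I' & i %| i') /\
    (forall j, j \in J -> exists2 j', j' \in J' & j %| j'))).
Proof.
move=> /allP aI /allP aJ /allP aI' /allP aJ' nJ nJ'; split.
- move=> H; split.
  + move=> i iI i1.
    have hi : 1 < i by have := aI i iI; rewrite leq_eqVlt eq_sym (negPf i1).
    have := H _ (@self_mem (inK I J) (GL i) iI).
    move=> /(transfer (a := ai i) (s1 := pwt i.-1) (s2 := pwt i) (t1 := pwt i)
       (t2 := pwt i.+1) (t3 := Imp (pwt i.-1) (pwt i)) (t4 := V)).
    case/(_ (srcI1 hi) (srcI2 hi) (srcI3 hi)) => c [Kc [b [B1 B2 B3]]].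
    case: c Kc b B1 B2 B3 => n /= Kc b B1 B2 B3.
      by exists n => //; apply: (tgtI_Ln hi B1 B2 B3).
    by case: (tgtI_Lnk hi B1 B2 B3).
  + move=> j jJ.
    have hj : 0 < j by have := aJ j jJ.
    set M := (sumn I' + sumn J').+1.
    have := H _ (@self_mem (inK I J) (GLL j) jJ).
    move=> /(transfer (a := cj j) (s1 := pwg (dtm j) M) (s2 := pwg (dtm j) M.+1)
       (t1 := pwt j.+1) (t2 := pwt j.+2) (t3 := pwt j.+1) (t4 := pwt j.+2)).
    case/(_ (@srcJ1 j hj M) (srcJ2 hj) (srcJ2 hj)) => c [Kc [b [B1 B2 _]]].
    case: c Kc b B1 B2 => n Kc b B1 B2.
      exfalso; apply: B1; rewrite !eval_pwg; apply: tgtJ_Ln.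
      by apply: leq_trans (mem_le_sumn Kc) _; rewrite /M ltnW // ltnS leq_addr.
    exists n => //; apply: (tgtJ_Lnk hj _ B2 B1).
    by rewrite /M ltnS; apply: leq_trans (mem_le_sumn Kc) _; apply: leq_addl.
- move=> [HI HJ] A; apply: (@ISPPu_emb (inK I J) (inK I' J') (emb_of I' J') A) => c.
  case: c => [i|j] /= Kc.
  + have hi : 0 < i by have := aI i Kc.
    case: eqP => [Ei|Ni].
      subst i; have hj0 : head 1 J' \in J' by case: J' nJ' {HJ aJ'} => // ? ? _; apply: mem_head.
      by split=> //; apply: e1_hom; apply: aJ'.
    have [T1 T2] := tgt_spec (HI i Kc (introN eqP Ni)).
    by split=> //; apply: eI_hom => //; apply: aI'.
  + have hj : 0 < j by have := aJ j Kc.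
    have [T1 T2] := tgt_spec (HJ j Kc).
    by split=> //; apply: eJ_hom => //; apply: aJ'.
Qed.
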